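(* Let $(G,R,\omega)$ be a metric RPP instance and let $c$ be the number of connected components of $G\langle R\rangle$. For every edge-minimizing Eulerian extension $S$, at most $2c-2$ vertices that are balanced in $G\langle R\rangle$ are incident to edges of $S$. The bound is tight: for every $c\ge 1$ there is a metric RPP instance with $c$ components and an edge-minimizing Eulerian extension $S$ such that exactly $2c-2$ balanced vertices of $G\langle R\rangle$ are incident to edges of $S$.
   Context: An RPP instance is a triple $(G,R,\omega)$, where $G=(V,E)$ is an undirected multigraph, $\omega\colon E\to\mathbb{N}$ assigns weights (parallel edges have equal weight), and $R$ is a nonempty multiset of edges of $G$. The instance is metric if $G$ contains an edge between any two vertices and the weights satisfy the triangle inequality $\omega(\{u,w\})\le\omega(\{u,v\})+\omega(\{v,w\})$ for all $u,v,w\in V$. For a multiset $X$ of edges: - $\omega(X)$ and $|X|$ are the weight and cardinality counted with multiplicity; - $V(X)$ is the set of vertices incident to edges of $X$; - $G\langle X\rangle=(V(X),X)$ is the multigraph formed by $X$ (no isolated vertices); - $\uplus$ denotes multiset sum. A vertex is balanced in a multigraph if its degree is even (a loop counts 2), and imbalanced otherwise. A multigraph without isolated vertices is Eulerian if it is connected and all vertices are balanced. An Eulerian extension for $(G,R,\omega)$ is a multiset $S$ of edges of $G$ such that $G\langle R\uplus S\rangle$ is Eulerian. It is edge-minimizing if there is no Eulerian extension $S'$ with $|S'|<|S|$ and $\omega(S')\le\omega(S)$. *)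

(* Defs.v *)
From mathcomp Require Import all_boot.
Set Implicit Arguments. Unset Strict Implicit. Unset Printing Implicit Defensive.

(* An undirected multigraph G = (V, E): V a finite vertex type, E a type of
   edge identifiers, [ends e] the (unordered) pair of endpoints of e
   (a loop when both coincide), [w e] its weight.  Multisets of edges are
   sequences of edge identifiers (order irrelevant). *)
Section RPP.
Variables (V : finType) (E : eqType) (ends : E -> V * V) (w : E -> nat).

Definition joins (e : E) (u v : V) : bool :=
  (ends e == (u, v)) || (ends e == (v, u)).

Definition incident (e : E) (v : V) : bool :=
  ((ends e).1 == v) || ((ends e).2 == v).

Definition weight (X : seq E) : nat := \sum_(e <- X) w e.

(* degree in G<X>; a loop counts 2 *)
Definition deg (X : seq E) (v : V) : nat :=
  \sum_(e <- X) (((ends e).1 == v) + ((ends e).2 == v)).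

Definition VX (X : seq E) : {set V} := [set v | has (incident^~ v) X].

Definition adj (X : seq E) : rel V := fun u v => has (fun e => joins e u v) X.

Definition balanced (X : seq E) (v : V) : bool := ~~ odd (deg X v).

Definition connectedX (X : seq E) : Prop :=
  forall u v, u \in VX X -> v \in VX X -> connect (adj X) u v.

Definition eulerian (X : seq E) : Prop :=
  connectedX X /\ forall v, v \in VX X -> balanced X v.

Definition ncomp (X : seq E) : nat :=
  #|[set [set y in VX X | connect (adj X) x y] | x in VX X]|.

Definition parallel_eq_weight : Prop :=
  forall e f, joins e (ends f).1 (ends f).2 -> w e = w f.

Definition metric : Prop :=
  (forall u v, u != v -> exists e, joins e u v) /\
  (forall u v x e1 e2 e3, joins e1 u x -> joins e2 u v -> joins e3 v x ->
      w e1 <= w e2 + w e3).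

Definition eulerian_extension (R S : seq E) : Prop := eulerian (R ++ S).

Definition edge_minimizing (R S : seq E) : Prop :=
  eulerian_extension R S /\
  ~ (exists S', eulerian_extension R S' /\ size S' < size S /\ weight S' <= weight S).

Definition balanced_touched (R S : seq E) : {set V} :=
  [set v | [&& v \in VX R, balanced R v & v \in VX S]].

End RPP.

(* Main.v *)
Require Import Defs.
From mathcomp Require Import all_boot zify.
Set Implicit Arguments. Unset Strict Implicit. Unset Printing Implicit Defensive.


Section Basic.
Variables (V : finType) (E : eqType) (ends : E -> V * V) (w : E -> nat).

Local Notation joins := (joins ends).
Local Notation incident := (incident ends).
Local Notation deg := (deg ends).
Local Notation VX := (VX ends).
Local Notation adj := (adj ends).
Local Notation weight := (weight w).

Definition contrib e y := (((ends e).1 == y) + ((ends e).2 == y))%N.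

Lemma deg_nil y : deg [::] y = 0. Proof. by rewrite /Defs.deg big_nil. Qed.
Lemma deg_cons e X y : deg (e :: X) y = contrib e y + deg X y.
Proof. by rewrite /Defs.deg big_cons. Qed.
Lemma deg_cat X Y y : deg (X ++ Y) y = deg X y + deg Y y.
Proof. by rewrite /Defs.deg big_cat. Qed.
Lemma deg_perm X Y y : perm_eq X Y -> deg X y = deg Y y.
Proof. by move=> h; rewrite /Defs.deg (perm_big _ h). Qed.
Lemma weight_cons e X : weight (e :: X) = w e + weight X.
Proof. by rewrite /Defs.weight big_cons. Qed.
Lemma weight_perm X Y : perm_eq X Y -> weight X = weight Y.
Proof. by move=> h; rewrite /Defs.weight (perm_big _ h). Qed.
Lemma weight_filter p X : weight (filter p X) <= weight X.
Proof.
elim: X => [|e X IH] //=; case: (p e); rewrite !weight_cons ?leq_add2l //.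
exact: leq_trans IH (leq_addl _ _).
Qed.

Lemma joins_sym e u v : joins e u v = joins e v u.
Proof. by rewrite /Defs.joins orbC. Qed.

Lemma joins_ends e : joins e (ends e).1 (ends e).2.
Proof. by rewrite /Defs.joins -surjective_pairing eqxx. Qed.

Lemma joinsP e u v : joins e u v ->
  ((ends e).1 = u /\ (ends e).2 = v) \/ ((ends e).1 = v /\ (ends e).2 = u).
Proof.
by case/orP=> /eqP ->; [left|right].
Qed.

Lemma contrib_joins e u v y : joins e u v -> contrib e y = ((u == y) + (v == y))%N.
Proof. by rewrite /contrib; case/joinsP => -[-> ->] // ; rewrite addnC. Qed.

Lemma joins_incident e u v : joins e u v -> incident e u.
Proof. by rewrite /Defs.incident; case/joinsP => -[-> ->]; rewrite eqxx ?orbT. Qed.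

Lemma incident_other e v : incident e v -> exists u, joins e v u.
Proof.
case/orP => /eqP h.
- by exists (ends e).2; rewrite -h joins_ends.
- by exists (ends e).1; rewrite -h joins_sym joins_ends.
Qed.

Lemma contrib_incident e v : (0 < contrib e v) = incident e v.
Proof. by rewrite /contrib /Defs.incident; case: (_ == v); case: (_ == v). Qed.

Lemma deg_pos X v : 0 < deg X v -> has (incident^~ v) X.
Proof.
elim: X => [|e X IH]; first by rewrite deg_nil.
rewrite deg_cons /=; case h: (incident e v) => //=.
by move: h; rewrite -contrib_incident lt0n => /negbFE /eqP ->.
Qed.

Lemma deg_notVX X v : v \notin VX X -> deg X v = 0.
Proof.
rewrite /Defs.VX inE => h; apply/eqP; rewrite -leqn0 leqNgt; apply/negP.
by move/deg_pos; rewrite (negbTE h).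
Qed.

Lemma inVX X v : (v \in VX X) = has (incident^~ v) X.
Proof. by rewrite /Defs.VX inE. Qed.

Lemma adj_sym X : symmetric (adj X).
Proof. by move=> u v; rewrite /Defs.adj; apply: eq_has => e; rewrite joins_sym. Qed.

Lemma connect_symX X : connect_sym (adj X).
Proof. exact/sym_connect_sym/adj_sym. Qed.

Lemma adjP X u v : reflect (exists2 e, e \in X & joins e u v) (adj X u v).
Proof. exact: hasP. Qed.

Lemma adj_sub X Y u v : {subset X <= Y} -> adj X u v -> adj Y u v.
Proof. move=> s /adjP [e /s eY j]; apply/adjP; by exists e. Qed.

Lemma conn_sub X Y u v : {subset X <= Y} -> connect (adj X) u v -> connect (adj Y) u v.
Proof.
move=> s; apply: connect_sub => x y h; apply: connect1; exact: adj_sub h.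
Qed.

Lemma conn_eq X Y : X =i Y -> connect (adj X) =2 connect (adj Y).
Proof.
move=> h; apply: eq_connect => u v; apply/idP/idP; apply: adj_sub => x; by rewrite h.
Qed.

Lemma adj_joins X e u v : e \in X -> joins e u v -> adj X u v.
Proof. by move=> eX j; apply/adjP; exists e. Qed.

End Basic.


Section Cut.
Variables (V : finType) (E : eqType) (ends : E -> V * V).
Local Notation deg := (deg ends).
Local Notation adj := (adj ends).

Definition cross (K : {set V}) (e : E) := ((ends e).1 \in K) != ((ends e).2 \in K).

Lemma sum_eq_in (a : V) (K : {set V}) : \sum_(y in K) (a == y : nat) = (a \in K).
Proof.
case: (boolP (a \in K)) => h.
  rewrite (bigD1 a) //= eqxx big1 // => y /andP [_]; by rewrite eq_sym => /negbTE ->.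
rewrite big1 // => y yK; case: eqP => // ay; by rewrite ay yK in h.
Qed.

Lemma deg_sum X (K : {set V}) :
  \sum_(y in K) deg X y = \sum_(e <- X) (((ends e).1 \in K) + ((ends e).2 \in K)).
Proof.
rewrite /Defs.deg exchange_big; apply: eq_bigr => e _.
by rewrite big_split /= !sum_eq_in.
Qed.

Lemma cut_parity X (K : {set V}) :
  (forall y, ~~ odd (deg X y)) -> ~~ odd (count (cross K) X).
Proof.
move=> hev.
have h1 : ~~ odd (\sum_(y in K) deg X y).
  by apply: (big_ind (fun n => ~~ odd n)) => // m n hm hn; rewrite oddD (negbTE hm) (negbTE hn).
suff -> : odd (count (cross K) X) = odd (\sum_(y in K) deg X y) by [].
rewrite deg_sum; elim: X {hev h1} => [|e X IH]; first by rewrite big_nil.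
rewrite big_cons /= !oddD IH /cross.
by case: (_ \in K); case: (_ \in K).
Qed.

Lemma crossing X (K : {set V}) a b :
  connect (adj X) a b -> a \in K -> b \notin K -> has (cross K) X.
Proof.
move/connectP => [p pth ->] {b}.
elim: p a pth => [|y p IH] a /=; first by move=> _ ->.
case/andP => /hasP [e eX j] pth aK; case: (boolP (y \in K)) => yK.
  exact: IH.
move=> _; apply/hasP; exists e => //; rewrite /cross.
by case/joinsP: j => -[-> ->]; rewrite aK (negbTE yK).
Qed.

Lemma closed_nocross Y a e :
  e \in Y -> ~~ cross [set y | connect (adj Y) a y] e.
Proof.
move=> eY; rewrite /cross !inE negbK.
have j := joins_ends ends e.
apply/eqP; apply/idP/idP => h; apply: connect_trans h _; apply: connect1.
  exact: adj_joins eY j.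
by rewrite adj_sym; exact: adj_joins eY j.
Qed.

End Cut.


Section Improve.
Variables (V : finType) (E : eqType) (ends : E -> V * V) (w : E -> nat).
Local Notation joins := (joins ends).
Local Notation incident := (incident ends).
Local Notation deg := (deg ends).
Local Notation VX := (VX ends).
Local Notation adj := (adj ends).
Local Notation weight := (weight w).
Local Notation contrib := (contrib ends).

Lemma deg_filter p X y : (forall e, e \in X -> ~~ p e -> contrib e y = 0) ->
  deg (filter p X) y = deg X y.
Proof.
elim: X => [|e X IH] //= h.
have IH' : deg [seq x <- X | p x] y = deg X y.
  by apply: IH => f fX; apply: h; rewrite inE fX orbT.
case: (boolP (p e)) => pe; rewrite !deg_cons IH' //.
by rewrite h ?inE ?eqxx.
Qed.

Lemma improve R S S1 : edge_minimizing ends w R S -> size S1 < size S ->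
  weight S1 <= weight S ->
  (forall y, ~~ odd (deg (R ++ S1) y)) ->
  (forall a b, a \in VX R -> b \in VX R -> connect (adj (R ++ S1)) a b) -> False.
Proof.
move=> [_ hmin] hs hw hev hc; apply: hmin.
set X := R ++ S1.
pose good y := [exists r, (r \in VX R) && connect (adj X) y r].
pose S' := filter (fun e => good (ends e).1) S1.
have g1 : forall x y, good x -> adj X x y -> good y.
  move=> x y /existsP [r /andP [rR c]] a; apply/existsP; exists r; rewrite rR /=.
  by apply: connect_trans c; apply: connect1; rewrite adj_sym.
have eX : forall e, e \in S1 -> e \in X by move=> e eS; rewrite mem_cat eS orbT.
have g2 : forall e y, e \in S1 -> incident e y -> good y -> good (ends e).1.
  move=> e y eS /orP [/eqP -> //| /eqP h2] gy; apply: (g1 y) => //.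
  by rewrite -h2 adj_sym; apply: adj_joins (eX _ eS) (joins_ends _ _).
have g3 : forall y, y \in VX (R ++ S') -> good y.
  move=> y; rewrite inVX has_cat => /orP [hR|/hasP [e]].
    by apply/existsP; exists y; rewrite inVX hR connect0.
  rewrite mem_filter => /andP [ge eS] /orP [/eqP <- //| /eqP <-].
  by apply: (g1 _ _ ge); apply: adj_joins (eX _ eS) (joins_ends _ _).
have g4 : forall x y, good x -> connect (adj X) x y -> connect (adj (R ++ S')) x y.
  move=> x y gx /connectP [p pth ->] {y}.
  elim: p x gx pth => [|z p IH] x gx /=; first by rewrite connect0.
  case/andP => a pth; apply: connect_trans (IH z (g1 _ _ gx a) pth).
  apply: connect1; case/adjP: a => e eXe j; move: eXe; rewrite /X mem_cat => /orP [eR|eS].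
    by apply: adj_joins j; rewrite mem_cat eR.
  have ge := g2 e x eS (joins_incident j) gx.
  by apply: adj_joins j; rewrite mem_cat mem_filter eS ge orbT.
exists S'; split; [|split].
- split.
    move=> u v /g3 gu /g3 gv; apply: g4 => //.
    case/existsP: gu => ru /andP [ruR cu]; case/existsP: gv => rv /andP [rvR cv].
    apply: connect_trans cu _; apply: connect_trans (hc _ _ ruR rvR) _.
    by rewrite connect_symX.
  move=> v /g3 gv; rewrite /balanced deg_cat deg_filter.
    by rewrite -deg_cat; apply: hev.
  move=> e eS ng; apply/eqP; rewrite -leqn0 leqNgt contrib_incident; apply/negP => inc.
  by rewrite (g2 _ _ eS inc gv) in ng.
- by apply: leq_ltn_trans hs; rewrite size_filter count_size.
- exact: leq_trans (weight_filter _ _ _) hw.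
Qed.

End Improve.


Section Shortcut.
Variables (V : finType) (E : eqType) (ends : E -> V * V) (w : E -> nat).
Local Notation joins := (joins ends).
Local Notation incident := (incident ends).
Local Notation deg := (deg ends).
Local Notation VX := (VX ends).
Local Notation adj := (adj ends).
Local Notation weight := (weight w).
Local Notation contrib := (contrib ends).

Lemma par_lift R S S1 m :
  (forall y, deg S y = deg S1 y + (m y).*2) ->
  (forall y, ~~ odd (deg (R ++ S) y)) -> forall y, ~~ odd (deg (R ++ S1) y).
Proof.
move=> h hev y; have := hev y; rewrite !deg_cat h addnA oddD odd_double.
by rewrite addbF.
Qed.

Lemma pair_shortcut R S e1 e2 v u1 u2 : metric ends w ->
  e1 \in S -> e2 \in rem e1 S -> joins e1 v u1 -> joins e2 v u2 ->
  (forall y, ~~ odd (deg (R ++ S) y)) ->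
  exists S1, [/\ size S1 < size S, weight S1 <= weight S,
    (forall y, ~~ odd (deg (R ++ S1) y)),
    {subset rem e2 (rem e1 S) <= S1} &
    (u1 != u2 -> exists2 f, f \in S1 & joins f u1 u2)].
Proof.
move=> [hm1 hm2] e1S e2S j1 j2 hev.
set S0 := rem e2 (rem e1 S).
have hp : perm_eq S [:: e1, e2 & S0].
  apply: perm_trans (perm_to_rem e1S) _; rewrite perm_cons.
  exact: perm_to_rem e2S.
have hsz := perm_size hp; have hw := weight_perm w hp.
have hd y := deg_perm ends y hp; rewrite !weight_cons in hw.
case: (eqVneq u1 u2) => hu.
- exists S0; split.
  + by rewrite hsz /=.
  + by rewrite hw addnA leq_addl.
  + apply: (par_lift (m := fun y => ((v == y) + (u1 == y))%N)) hev => y.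
    rewrite hd !deg_cons (contrib_joins y j1) (contrib_joins y j2) -hu -addnn; lia.
  + by [].
  + by [].

- have [f jf] := hm1 u1 u2 hu.
  have wf : w f <= w e1 + w e2.
    by apply: (hm2 u1 v u2) => //; rewrite joins_sym.
  exists (f :: S0); split.
  + by rewrite hsz /=.
  + by rewrite weight_cons hw addnA leq_add2r.
  + apply: (par_lift (m := fun y => (v == y) : nat)) hev => y.
    rewrite hd !deg_cons (contrib_joins y j1) (contrib_joins y j2) (contrib_joins y jf) -addnn; lia.
  + by move=> x xS; rewrite inE xS orbT.
  + by move=> _; exists f; rewrite ?inE ?eqxx.
Qed.

Lemma vertex_shortcut R S v : metric ends w ->
  v \in VX S -> ~~ odd (deg S v) ->
  (forall y, ~~ odd (deg (R ++ S) y)) ->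
  exists S1, [/\ size S1 < size S, weight S1 <= weight S,
    (forall y, ~~ odd (deg (R ++ S1) y)) &
    {subset filter (fun e => ~~ incident e v) S <= S1}].
Proof.
move=> hm vS dv hev.
have nI : forall x e, x \in filter (fun e => ~~ incident e v) S -> incident e v -> x != e.
  move=> x e; rewrite mem_filter => /andP [nx _] ie; apply/eqP => h.
  by rewrite h ie in nx.
have fS : forall x, x \in filter (fun e => ~~ incident e v) S -> x \in S.
  by move=> x; rewrite mem_filter => /andP [].
case: (boolP (has (fun e => joins e v v) S)) => [/hasP [e1 e1S j1]|nl].
  have hp := perm_to_rem e1S.
  have hsz := perm_size hp; have hw := weight_perm w hp.
  have hd y := deg_perm ends y hp; rewrite weight_cons in hw.
  exists (rem e1 S); split.
  - by rewrite hsz.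
  - by rewrite hw leq_addl.
  - apply: (par_lift (m := fun y => (v == y) : nat)) hev => y.
    rewrite hd deg_cons (contrib_joins y j1) -addnn; lia.
  - move=> x xf; apply: rem_mem; [exact: nI xf (joins_incident j1) | exact: fS].
move: vS; rewrite inVX => /hasP [e1 e1S i1].
have [u1 j1] := incident_other i1.
have hp := perm_to_rem e1S.
have hd := deg_perm ends v hp; rewrite deg_cons (contrib_joins v j1) eqxx in hd.
have u1v : (u1 == v) = false.
  apply/negbTE/negP => /eqP h; move/hasP: nl; apply; exists e1 => //.
  by rewrite -{2}h.
rewrite u1v /= in hd; rewrite hd /= in dv.
have : 0 < deg (rem e1 S) v by case: (deg _ v) dv.
move/deg_pos/hasP => [e2 e2S i2].
have [u2 j2] := incident_other i2.
have [S1 [h1 h2 h3 h4 _]] := pair_shortcut hm e1S e2S j1 j2 hev.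
exists S1; split => // x xf; apply: h4.
apply: rem_mem; first exact: nI xf i2.
apply: rem_mem; [exact: nI xf i1 | exact: fS].
Qed.

End Shortcut.


Section Steps.
Variables (V : finType) (E : eqType) (ends : E -> V * V) (w : E -> nat).
Local Notation joins := (joins ends).
Local Notation incident := (incident ends).
Local Notation deg := (deg ends).
Local Notation VX := (VX ends).
Local Notation adj := (adj ends).
Local Notation weight := (weight w).
Local Notation contrib := (contrib ends).
Local Notation cross := (cross ends).

Lemma all_even X : eulerian ends X -> forall y, ~~ odd (deg X y).
Proof.
move=> [_ hb] y; case: (boolP (y \in VX X)) => h; first exact: hb.
by rewrite deg_notVX.
Qed.

Lemma joins_other e z u u' : joins e z u -> joins e z u' -> u = u'.
Proof.
by case/joinsP => -[h1 h2]; case/joinsP => -[h3 h4]; congruence.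
Qed.

Lemma VX_catl X Y v : v \in VX X -> v \in VX (X ++ Y).
Proof. by rewrite !inVX has_cat => ->. Qed.

Lemma balanced_needs R S v : metric ends w -> edge_minimizing ends w R S ->
  v \in VX R -> balanced ends R v -> v \in VX S ->
  ~ (forall a b, a \in VX R -> b \in VX R ->
       connect (adj (R ++ filter (fun e => ~~ incident e v) S)) a b).
Proof.
move=> hm hmin vR bv vS hc.
have hev := all_even hmin.1.
have dv : ~~ odd (deg S v).
  by have := hev v; rewrite deg_cat oddD (negbTE bv).
have [S1 [h1 h2 h3 h4]] := vertex_shortcut hm vS dv hev.
apply: (improve hmin h1 h2 h3) => a b aR bR.
apply: conn_sub (hc a b aR bR) => x; rewrite !mem_cat => /orP [->//|/h4 ->].
by rewrite orbT.
Qed.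

Lemma no_steiner R S z : metric ends w -> edge_minimizing ends w R S ->
  z \in VX S -> z \in VX R.
Proof.
move=> hm hmin zS; apply/negPn/negP => zR.
have hev := all_even hmin.1.
set Sz := filter (fun e => ~~ incident e z) S.
set G0 := R ++ Sz.
have dz : ~~ odd (deg S z).
  by have := hev z; rewrite deg_cat (deg_notVX zR).
have G0S : forall e, e \in G0 -> e \in R ++ S.
  by move=> e; rewrite !mem_cat mem_filter => /orP [->|/andP [_ ->]]; rewrite ?orbT.
case: (boolP [forall a, forall b, (a \in VX R) ==> (b \in VX R) ==> connect (adj G0) a b]).
  move/forallP=> hc.
  have [S1 [h1 h2 h3 h4]] := vertex_shortcut hm zS dz hev.
  apply: (improve hmin h1 h2 h3) => a b aR bR.
  have := forallP (hc a) b; rewrite aR bR /= => c.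
  apply: conn_sub c => x; rewrite !mem_cat => /orP [->//|/h4 ->].
  by rewrite orbT.
move/forallPn => [a /forallPn [b]]; rewrite !negb_imply => /and3P [aR bR nab].
have noadj : forall y, ~~ adj G0 z y.
  move=> y; apply/negP => /adjP [e eG j]; move: eG; rewrite mem_cat => /orP [eR|].
    by move/negP: zR; apply; rewrite inVX; apply/hasP; exists e => //; exact: joins_incident j.
  by rewrite mem_filter (joins_incident j).
have zM : forall r, r \in VX R -> z \notin [set y | connect (adj G0) r y].
  move=> r rR; rewrite inE; apply/negP; rewrite connect_symX => /connectP [[|y p] /=].
    by move=> _ h; rewrite -h rR in zR.
  by rewrite (negbTE (noadj y)).
have crossz : forall r e, r \in VX R -> e \in R ++ S ->
    cross [set y | connect (adj G0) r y] e ->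
    e \in S /\ exists2 u, u \in [set y | connect (adj G0) r y] & joins e z u.
  move=> r e rR eX cr.
  have eS : e \in S.
    move: eX; rewrite mem_cat => /orP [eR|//].
    have eG : e \in G0 by rewrite mem_cat eR.
    by have := closed_nocross ends r eG; rewrite cr.
  split => //.
  case: (boolP (incident e z)) => iz; last first.
    have eG : e \in G0 by rewrite mem_cat mem_filter iz eS orbT.
    by have := closed_nocross ends r eG; rewrite cr.
  move: cr; rewrite /cross; case/orP: iz => /eqP h; rewrite h (negbTE (zM r rR)).
    move=> u2; exists (ends e).2; first by move: u2; case: (_ \in _).
    by rewrite -h joins_ends.
  move=> u1; exists (ends e).1; first by move: u1; case: (_ \in _).
  by rewrite -h joins_sym joins_ends.
have hconX : forall r r', r \in VX R -> r' \in VX R -> connect (adj (R ++ S)) r r'.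
  by move=> r r' rR r'R; apply: hmin.1.1; apply: VX_catl.
set K := [set y | connect (adj G0) a y].
set L := [set y | connect (adj G0) b y].
have KL : forall u, u \in K -> u \in L -> False.
  move=> u; rewrite !inE => h1 h2; move/negP: nab; apply.
  by apply: connect_trans h1 _; rewrite connect_symX.
have bK : b \notin K by rewrite inE.
have aL : a \notin L by rewrite inE connect_symX.
have aK : a \in K by rewrite inE connect0.
have bL : b \in L by rewrite inE connect0.
have cK : 1 < count (cross K) S.
  have hp := cut_parity K (hev).
  have h1 : has (cross K) (R ++ S) := crossing (hconX a b aR bR) aK bK.
  have h0 : count (cross K) R = 0.
    apply/eqP; rewrite -leqn0 leqNgt -has_count; apply/hasP => -[e eR ce].
    have eG : e \in G0 by rewrite mem_cat eR.
    by have := closed_nocross ends a eG; rewrite ce.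
  move: hp h1; rewrite has_count count_cat h0 /=.
  by case: (count _ S) => [|[|n]].
have [e1 e1S ce1] : exists2 e1, e1 \in S & cross K e1.
  by apply/hasP; rewrite has_count; apply: ltnW.
have [e2 e2S ce2] : exists2 e2, e2 \in rem e1 S & cross K e2.
  apply/hasP; rewrite has_count.
  have := permP (perm_to_rem e1S) (cross K); rewrite /= ce1 => h.
  by rewrite h in cK.
have [e3 e3X ce3] : exists2 e3, e3 \in R ++ S & cross L e3.
  by apply/hasP; apply: crossing (hconX b a bR aR) bL aL.
have e1X : e1 \in R ++ S by rewrite mem_cat e1S orbT.
have e2S' : e2 \in S := mem_rem e2S.
have e2X : e2 \in R ++ S by rewrite mem_cat e2S' orbT.
have [_ [u1 u1K j1]] := crossz a e1 aR e1X ce1.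
have [_ [u2 u2K j2]] := crossz a e2 aR e2X ce2.
have [e3S [u3 u3L j3]] := crossz b e3 bR e3X ce3.
have e31 : e3 != e1.
  by apply/eqP => h; subst e3; apply: (KL u1 u1K); rewrite (joins_other j1 j3).
have e32 : e2 != e3.
  by apply/eqP => h; subst e3; apply: (KL u2 u2K); rewrite (joins_other j2 j3).
have e3S1 : e3 \in rem e1 S by apply: rem_mem.
have u13 : u1 != u3 by apply/eqP => h; apply: (KL u1 u1K); rewrite h.
have [S1 [h1 h2 h3 h4 h5]] := pair_shortcut hm e1S e3S1 j1 j3 hev.
have [f fS1 jf] := h5 u13.
have e2S1 : e2 \in S1 by apply: h4; apply: rem_mem.
have SzS1 : {subset Sz <= S1}.
  move=> x; rewrite mem_filter => /andP [nx xS]; apply: h4.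
  have ne : forall e u, joins e z u -> x != e.
    by move=> e u j; apply/eqP => h; subst x; rewrite (joins_incident j) in nx.
  by apply: rem_mem; [exact: ne j3 | apply: rem_mem; [exact: ne j1|]].
set Y := R ++ S1.
have cG : forall x y, connect (adj G0) x y -> connect (adj Y) x y.
  move=> x y; apply: conn_sub => x'; rewrite !mem_cat => /orP [->//|/SzS1 ->].
  by rewrite orbT.
have S1Y : forall e, e \in S1 -> e \in Y by move=> e eS; rewrite mem_cat eS orbT.
have toa : forall r, r \in VX R -> connect (adj Y) r a.
  move=> r rR.
  case: (boolP (connect (adj G0) r a)) => ra; first exact: cG.
  case: (boolP (connect (adj G0) r b)) => rb.
    apply: connect_trans (cG _ _ rb) _.
    move: u3L; rewrite inE => /cG bu3; apply: connect_trans bu3 _.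
    apply: (@connect_trans _ _ u1).
      by apply: connect1; rewrite adj_sym; apply: adj_joins (S1Y _ fS1) jf.
    by move: u1K; rewrite inE => /cG; rewrite connect_symX.
  have rM : r \in [set y | connect (adj G0) r y] by rewrite inE connect0.
  have aM : a \notin [set y | connect (adj G0) r y] by rewrite inE.
  have /hasP [e4 e4X ce4] := crossing (hconX r a rR aR) rM aM.
  have [e4S [u4 u4M j4]] := crossz r e4 rR e4X ce4.
  have e41 : e4 != e1.
    apply/eqP => h; subst e4; move/negP: ra; apply.
    move: u4M u1K; rewrite (joins_other j1 j4) !inE => h1' h2'.
    by apply: connect_trans h1' _; rewrite connect_symX.
  have e43 : e4 != e3.
    apply/eqP => h; subst e4; move/negP: rb; apply.
    move: u4M u3L; rewrite (joins_other j3 j4) !inE => h1' h2'.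
    by apply: connect_trans h1' _; rewrite connect_symX.
  have e4S1 : e4 \in S1 by apply: h4; apply: rem_mem => //; apply: rem_mem.
  move: u4M; rewrite inE => /cG ru4; apply: connect_trans ru4 _.
  apply: (@connect_trans _ _ z).
    by apply: connect1; rewrite adj_sym; apply: adj_joins (S1Y _ e4S1) j4.
  apply: (@connect_trans _ _ u2).
    by apply: connect1; apply: adj_joins (S1Y _ e2S1) j2.
  by move: u2K; rewrite inE => /cG; rewrite connect_symX.
apply: (improve hmin h1 h2 h3) => r r' rR r'R.
by apply: connect_trans (toa r rR) _; rewrite connect_symX; apply: toa.
Qed.

End Steps.


Section Span.
Variables (V : finType) (E : eqType) (ends : E -> V * V) (w : E -> nat).
Local Notation joins := (joins ends).
Local Notation incident := (incident ends).
Local Notation deg := (deg ends).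
Local Notation VX := (VX ends).
Local Notation adj := (adj ends).

Definition cls (D : {set V}) X x := [set y in D | connect (adj X) x y].
Definition ncD D X := #|[set cls D X x | x in D]|.

Lemma ncD_eq (D : {set V}) X Y : connect (adj X) =2 connect (adj Y) -> ncD D X = ncD D Y.
Proof.
move=> h; rewrite /ncD (@eq_in_imset _ _ (cls D X) (cls D Y)) // => x _.
by apply/setP => y; rewrite !inE h.
Qed.

Lemma conn_add_same X e : connect (adj X) (ends e).1 (ends e).2 ->
  connect (adj (e :: X)) =2 connect (adj X).
Proof.
move=> h u v; apply/idP/idP; last by apply: conn_sub => x xX; rewrite inE xX orbT.
apply: connect_sub => x y /adjP [f]; rewrite inE => /orP [/eqP -> j|fX j].
  case/joinsP: j => -[<- <-] //; by rewrite connect_symX.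
by apply: connect1; apply: adj_joins fX j.
Qed.

Lemma conn_add_cong X Y e : connect (adj X) =2 connect (adj Y) ->
  connect (adj (e :: X)) =2 connect (adj (e :: Y)).
Proof.
have gen : forall X Y, connect (adj X) =2 connect (adj Y) ->
    forall u v, connect (adj (e :: X)) u v -> connect (adj (e :: Y)) u v.
  move=> X1 Y1 h; apply: connect_sub => x y /adjP [f]; rewrite inE => /orP [/eqP -> j|fX j].
    by apply: connect1; apply: adj_joins j; rewrite inE eqxx.
  have : connect (adj X1) x y by apply: connect1; apply: adj_joins fX j.
  rewrite h; apply: conn_sub => z zY; by rewrite inE zY orbT.
move=> h u v; apply/idP/idP; apply: gen => // x y; by rewrite h.
Qed.

Lemma ncD_add (D : {set V}) X e : (ends e).1 \in D -> (ends e).2 \in D ->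
  ~~ connect (adj X) (ends e).1 (ends e).2 -> ncD D (e :: X) < ncD D X.
Proof.
move=> aD bD nab.
set a := (ends e).1 in aD nab *; set b := (ends e).2 in bD nab *.
set X' := e :: X.
pose g (C : {set V}) := [set y in D | [exists x in C, connect (adj X') x y]].
have hg : {in D, forall x, g (cls D X x) = cls D X' x}.
  move=> x xD; apply/setP => y; rewrite !inE; congr (_ && _); apply/existsP/idP.
    move=> [x' /andP [hx' hc]]; rewrite inE in hx'; case/andP: hx' => _ hx'.
    apply: connect_trans hc; apply: conn_sub hx' => z zX; by rewrite inE zX orbT.
  by move=> hc; exists x; rewrite !inE xD connect0.
have -> : ncD D X' = #|[set g C | C in [set cls D X x | x in D]]|.
  rewrite /ncD -imset_comp (@eq_in_imset _ _ (cls D X') (g \o cls D X)) // => x xD /=.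
  by rewrite hg.
rewrite ltn_neqAle leq_imset_card andbT; apply/negP => /imset_injP inj.
have ca : cls D X a \in [set cls D X x | x in D] by apply: imset_f.
have cb : cls D X b \in [set cls D X x | x in D] by apply: imset_f.
have cab : connect (adj X') a b.
  by apply: connect1; apply: adj_joins (joins_ends _ _); rewrite inE eqxx.
have eq : g (cls D X a) = g (cls D X b).
  rewrite !hg //; apply/setP => y; rewrite !inE.
  by rewrite (same_connect (connect_symX _ _) cab).
have := inj _ _ ca cb eq; move/setP => /(_ b); rewrite !inE bD connect0 /=.
by move=> h; rewrite h in nab.
Qed.

Lemma span R0 (D : {set V}) S : (forall e, e \in S -> ((ends e).1 \in D) && ((ends e).2 \in D)) ->
  exists T, [/\ {subset T <= S}, connect (adj (R0 ++ T)) =2 connect (adj (R0 ++ S))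
            & size T + ncD D (R0 ++ S) <= ncD D R0].
Proof.
elim: S => [|e S IH] hS.
  by exists [::]; split => //; rewrite cats0.
have [|T [TS Tc Tn]] := IH.
  by move=> f fS; apply: hS; rewrite inE fS orbT.
have mc : forall Z, connect (adj (R0 ++ e :: Z)) =2 connect (adj (e :: (R0 ++ Z))).
  move=> Z; apply: conn_eq => x; rewrite !(mem_cat, inE).
  by case: (x == e); case: (x \in R0); case: (x \in Z).
case/andP: (hS e (mem_head _ _)) => aD bD.
case: (boolP (connect (adj (R0 ++ S)) (ends e).1 (ends e).2)) => hc.
  exists T; split.
  - by move=> x xT; rewrite inE TS ?orbT.
  - by move=> x y; rewrite mc conn_add_same.
  - by rewrite (ncD_eq D (mc S)) (ncD_eq D (conn_add_same hc)).
exists (e :: T); split.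
- by move=> x; rewrite !inE => /orP [->//|/TS ->]; rewrite orbT.
- by move=> x y; rewrite !mc; apply: conn_add_cong.
- rewrite (ncD_eq D (mc S)) /=.
  have := ncD_add aD bD hc; lia.
Qed.

Lemma card_incident T : #|[set v | has (incident^~ v) T]| <= 2 * size T.
Proof.
elim: T => [|e T IH].
  by rewrite leqn0 cards_eq0; apply/eqP/setP => v; rewrite !inE.
have -> : [set v | has (incident^~ v) (e :: T)] =
          [set (ends e).1; (ends e).2] :|: [set v | has (incident^~ v) T].
  apply/setP => v; rewrite !inE /= /Defs.incident.
  by rewrite ![v == _]eq_sym.
apply: leq_trans (leq_card_setU _ _).1 _; rewrite cards2 /=.
move: IH; case: (_ != _); lia.
Qed.

End Span.

Theorem part1 (V : finType) (E : eqType) (ends : E -> V * V) (w : E -> nat)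
          (R : seq E) :
      R != [::] -> parallel_eq_weight ends w -> metric ends w ->
      forall S : seq E, edge_minimizing ends w R S ->
      #|balanced_touched ends R S| <= 2 * ncomp ends R - 2.
Proof.
move=> hR _ hm S hmin.
have ends_in : forall e, e \in S -> ((ends e).1 \in VX ends R) && ((ends e).2 \in VX ends R).
  move=> e eS; apply/andP; split; apply: (no_steiner hm hmin); rewrite inVX;
  apply/hasP; exists e => //; by rewrite /Defs.incident eqxx ?orbT.
have [T [TS Tc Tn]] := span R ends_in.
have ncpos : 0 < ncD ends (VX ends R) (R ++ S).
  case: R hR {Tc Tn ends_in hmin} => [//|e R] _.
  apply/card_gt0P; exists (cls ends (VX ends (e :: R)) (e :: R ++ S) (ends e).1).
  apply: imset_f; rewrite inVX /= /Defs.incident eqxx //.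
have hn : ncomp ends R = ncD ends (VX ends R) R by [].
have sub : balanced_touched ends R S \subset [set v | has (incident ends^~ v) T].
  apply/subsetP => v; rewrite !inE => /and3P [vR bv vS].
  rewrite -!inVX in vR vS.
  apply/negPn/negP => nh; apply: (balanced_needs hm hmin vR bv vS) => a b aR bR.
  have : connect (adj ends (R ++ T)) a b.
    by rewrite Tc; apply: hmin.1.1; apply: VX_catl.
  apply: conn_sub => x; rewrite !mem_cat => /orP [->//|xT]; apply/orP; right.
  rewrite mem_filter TS // andbT; apply/negP => ix; move/negP: nh; apply.
  by apply/hasP; exists x.
have := subset_leq_card sub; have := card_incident ends T.
rewrite hn; lia.
Qed.


Section Ex.
Variable n : nat.
Definition VV : finType := ('I_n.+1 * bool)%type.
Definition EE : eqType := (VV * VV)%type.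
Definition endsE : EE -> VV * VV := id.
Definition pos (v : VV) : nat := (v.1 : nat) + v.2.
Definition dist (a b : VV) := (pos a - pos b) + (pos b - pos a).
Definition wE (e : EE) := dist e.1 e.2.

Definition R0 : seq EE := [seq ((i, false), (i, true)) | i <- enum 'I_n.+1].
Definition S0 : seq EE :=
  [seq ((widen_ord (leqnSn n) i, true), (lift ord0 i, false)) | i <- enum 'I_n].
Definition RR := R0 ++ R0.
Definition SS := S0 ++ S0.

Lemma joinsE e u v : joins endsE e u v = (e == (u, v)) || (e == (v, u)).
Proof. by []. Qed.

Lemma ex_parallel : parallel_eq_weight endsE wE.
Proof.
move=> e f; rewrite joinsE => /orP [] /eqP -> ; rewrite /wE /= /dist; case: f => a b /=; lia.
Qed.

Lemma ex_metric : metric endsE wE.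
Proof.
split.
  by move=> u v _; exists (u, v); rewrite joinsE eqxx.
move=> u v x e1 e2 e3; rewrite !joinsE.
by move=> /orP [] /eqP -> /orP [] /eqP -> /orP [] /eqP ->; rewrite /wE /dist /=; lia.
Qed.


Local Notation VXE := (VX endsE).
Local Notation adjE := (adj endsE).
Local Notation degE := (deg endsE).

Lemma deg_dbl (X : seq EE) v : ~~ odd (degE (X ++ X) v).
Proof. by rewrite deg_cat addnn odd_double. Qed.

Lemma VX_dbl (X : seq EE) v : (v \in VXE (X ++ X)) = (v \in VXE X).
Proof. by rewrite !inVX has_cat orbb. Qed.

Lemma adj_dbl (X : seq EE) u v : adjE (X ++ X) u v = adjE X u v.
Proof. by rewrite /Defs.adj has_cat orbb. Qed.

Lemma R0P e : e \in R0 -> exists i, e = ((i, false), (i, true)).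
Proof. by case/mapP => i _ ->; exists i. Qed.

Lemma R0_in i : ((i, false), (i, true)) \in R0.
Proof. by apply: map_f; rewrite mem_enum. Qed.

Lemma S0_in (i : 'I_n) : ((widen_ord (leqnSn n) i, true), (lift ord0 i, false)) \in S0.
Proof. by apply: map_f; rewrite mem_enum. Qed.

Lemma adjR u v : adjE RR u v = (u.1 == v.1) && (u.2 != v.2).
Proof.
rewrite adj_dbl; apply/idP/idP.
  case/adjP => e /R0P [i ->]; rewrite joinsE => /orP [] /eqP [<- <-]; by rewrite eqxx.
case: u v => [i b] [j b'] /= /andP [/eqP <- hb].
apply: (adj_joins (R0_in i)); rewrite joinsE.
by case: b b' hb => -[] //= _; rewrite eqxx ?orbT.
Qed.

Lemma connR u v : connect (adjE RR) u v = (u.1 == v.1).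
Proof.
apply/idP/idP.
  move/connectP => [p pth ->] {v}; elim: p u pth => [|y p IH] u /=; first by rewrite eqxx.
  by case/andP => a /IH; rewrite adjR in a; case/andP: a => /eqP ->.
move=> h; case: (eqVneq u.2 v.2) => h2.
  by have -> : u = v by case: u v h h2 => [? ?] [? ?] /= /eqP -> ->.
by apply: connect1; rewrite adjR h h2.
Qed.

Lemma VXR v : v \in VXE RR.
Proof.
rewrite VX_dbl inVX; apply/hasP; exists ((v.1, false), (v.1, true)); first exact: R0_in.
by case: v => i [] /=; rewrite /Defs.incident /endsE /= eqxx ?orbT.
Qed.

Lemma ncompR : ncomp endsE RR = n.+1.
Proof.
rewrite /ncomp.
pose F (i : 'I_n.+1) := [set y : VV | y.1 == i].
have -> : [set [set y in VXE RR | connect (adjE RR) x y] | x in VXE RR] = [set F i | i in [set: 'I_n.+1]].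
  apply/setP => C; apply/imsetP/imsetP => -[x _ ->].
    exists x.1; rewrite ?inE //; apply/setP => y; by rewrite !inE -inVX VXR connR.
  exists (x, false); first exact: VXR.
  by apply/setP => y; rewrite !inE -inVX VXR connR eq_sym.
have injF : injective F.
  by move=> i j /setP /(_ (i, false)); rewrite !inE eqxx => /esym /eqP.
by rewrite (card_imset _ injF) cardsT card_ord.
Qed.

Lemma conn_all (X : seq EE) u v : {subset SS <= X} -> connect (adjE (RR ++ X)) u v.
Proof.
move=> SX.
have cR : forall x y, connect (adjE RR) x y -> connect (adjE (RR ++ X)) x y.
  by move=> x y; apply: conn_sub => e; rewrite mem_cat => ->.
suff to0 : forall x, connect (adjE (RR ++ X)) x (ord0, false).
  by apply: connect_trans (to0 u) _; rewrite connect_symX.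
suff : forall k (x : VV), (x.1 : nat) = k -> connect (adjE (RR ++ X)) x (ord0, false).
  by move=> h x; exact: h.
elim=> [|k IH] x hx.
  by apply: cR; rewrite connR; apply/eqP/val_inj.
have kn : k < n by have := ltn_ord x.1; rewrite hx.
set i := Ordinal kn.
have e_in : ((widen_ord (leqnSn n) i, true), (lift ord0 i, false)) \in RR ++ X.
  by rewrite mem_cat SX ?orbT // mem_cat S0_in.
apply: (@connect_trans _ _ (lift ord0 i, false)).
  by apply: cR; rewrite connR /=; apply/eqP/val_inj; rewrite /= hx.
apply: (@connect_trans _ _ (widen_ord (leqnSn n) i, true)).
  by apply: connect1; apply: (adj_joins e_in); rewrite joinsE eqxx orbT.
by apply: IH.
Qed.

Lemma eulerRS : eulerian endsE (RR ++ SS).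
Proof.
split; first by move=> u v _ _; apply: conn_all.
by move=> v _; rewrite /balanced deg_cat oddD (negbTE (deg_dbl _ _)) (negbTE (deg_dbl _ _)).
Qed.

Lemma weight0 (X : seq EE) : weight wE X = 0 -> forall e, e \in X -> wE e = 0.
Proof.
elim: X => [//|f X IH]; rewrite weight_cons => h e; rewrite inE => /orP [/eqP ->|eX].
  by move: h; case: (wE f).
by apply: IH => //; move: h; lia.
Qed.

Lemma weightS : weight wE SS = 0.
Proof.
rewrite /Defs.weight big1_seq // => e /andP [_]; rewrite mem_cat orbb => /mapP [i _ ->].
by rewrite /wE /dist /pos /= /bump leq0n add1n addn0 addn1 subnn.
Qed.

Lemma count_sumE (T : Type) (a : pred T) s : count a s = \sum_(x <- s) (a x : nat).
Proof. by elim: s => [|x s IH]; rewrite ?big_nil ?big_cons //= IH. Qed.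

Lemma sum_le_size (T : eqType) (f : T -> nat) (s : seq T) :
  (forall x, x \in s -> f x <= 1) -> \sum_(x <- s) f x <= size s.
Proof.
elim: s => [|x s IH] h; rewrite ?big_nil ?big_cons //=.
rewrite -add1n; apply: leq_add; first by apply: h; rewrite inE eqxx.
by apply: IH => y ys; apply: h; rewrite inE ys orbT.
Qed.

Lemma sum_eqm m k : \sum_(j < k) ((j : nat) == m : nat) = (m < k).
Proof.
elim: k => [|k IH]; first by rewrite big_ord0.
rewrite big_ord_recr /= IH.
case: (ltngtP m k) => [h|h|->].
- by rewrite ltnS ltnW.
- by rewrite ltnS leqNgt h.
- by rewrite ltnSn.
Qed.

Definition Kc (k : nat) : {set VV} := [set v : VV | (v.1 : nat) <= k].

Lemma cross_le (e : EE) k : wE e = 0 ->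
  (cross endsE (Kc k) e : nat) <= ((k : nat) == minn e.1.1 e.2.1).
Proof.
rewrite /cross /Kc !inE /endsE /wE /dist /pos; case: e => [[a1 a2] [b1 b2]] /= h.
case: (leqP a1 k); case: (leqP b1 k) => //= h1 h2; apply/eqP;
  case: a2 b2 h => -[] /= h; lia.
Qed.

Lemma ex_minimizing : edge_minimizing endsE wE RR SS.
Proof.
split; first exact: eulerRS.
move=> [S' [eul [hsz hw]]].
rewrite weightS leqn0 in hw; have w0 := weight0 (eqP hw).
have hev := all_even eul.
have hsz' : size SS = n.*2 by rewrite size_cat size_map size_enum_ord addnn.
have lo : forall k, k < n -> 1 < count (cross endsE (Kc k)) S'.
  move=> k kn.
  have hp := cut_parity (Kc k) hev.
  have h0 : count (cross endsE (Kc k)) RR = 0.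
    apply/eqP; rewrite -leqn0 leqNgt -has_count; apply/hasP => -[e].
    rewrite mem_cat orbb => /R0P [i ->]; by rewrite /cross /endsE !inE /= eqxx.
  have cc : connect (adjE (RR ++ S')) (ord0, false) (ord_max, false).
    by apply: eul.1; apply: VX_catl; apply: VXR.
  have m0 : (ord0, false) \in Kc k by rewrite inE.
  have m1 : (ord_max, false) \notin Kc k by rewrite inE /= -ltnNge.
  move: hp (crossing cc m0 m1); rewrite has_count count_cat h0 /=.
  by case: (count _ S') => [|[|m]].
have lower : n.*2 <= \sum_(k < n) count (cross endsE (Kc k)) S'.
  rewrite -muln2 -{1}(card_ord n) -sum_nat_const; apply: leq_sum => k _; exact: lo.
have upper : \sum_(k < n) count (cross endsE (Kc k)) S' <= size S'.
  under eq_bigr => k _ do rewrite count_sumE.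
  rewrite exchange_big /=; apply: sum_le_size => e eS.
  apply: (@leq_trans (\sum_(i < n) ((i : nat) == minn e.1.1 e.2.1 : nat))).
    by apply: leq_sum => i _; apply: cross_le; exact: w0.
  by rewrite sum_eqm; case: (_ < _).
by move: hsz; rewrite hsz'; have := leq_trans lower upper; lia.
Qed.

End Ex.


Section Ex2.
Variable n : nat.
Local Notation VXE := (VX (@endsE n)).

Lemma VXS (v : VV n) : (v \in VXE (SS n)) = (v != (ord_max, true)) && (v != (ord0, false)).
Proof.
rewrite /SS VX_dbl inVX; case: v => j b; apply/hasP/idP.
  move=> [e /mapP [i _ ->]]; rewrite /Defs.incident /endsE /=.
  case/orP => /eqP [<- <-]; rewrite !xpair_eqE /= andbT ?andbF ?andbT //.
  by apply/eqP => /(congr1 val) /=; move: (ltn_ord i); lia.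
rewrite !xpair_eqE; case: b => /=; rewrite ?andbT ?andbF ?andTb /= => h.
  have jn : (j : nat) < n.
    have := ltn_ord j => h1.
    suff : (j : nat) != n by lia.
    case/andP: h => /eqP h _.
    by apply/eqP => e; apply: h; apply: val_inj.
  exists ((widen_ord (leqnSn n) (Ordinal jn), true), (lift ord0 (Ordinal jn), false)).
    exact: S0_in.
  rewrite /Defs.incident /endsE /=; apply/orP; left.
  by rewrite xpair_eqE andbT; apply/eqP/val_inj.
have jn : (j : nat).-1 < n.
  have := ltn_ord j => h1.
  suff : (j : nat) != 0 by lia.
  by apply/eqP => e; move/eqP: h; apply; apply: val_inj.
exists ((widen_ord (leqnSn n) (Ordinal jn), true), (lift ord0 (Ordinal jn), false)).
  exact: S0_in.
rewrite /Defs.incident /endsE /= orbC; apply/orP; left.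
rewrite xpair_eqE andbT; apply/eqP/val_inj; rewrite /= /bump /=.
have : (j : nat) != 0 by apply/eqP => e; move/eqP: h; apply; apply: val_inj.
lia.
Qed.

Lemma cardBT : #|balanced_touched (@endsE n) (RR n) (SS n)| = 2 * n.+1 - 2.
Proof.
have -> : balanced_touched (@endsE n) (RR n) (SS n) =
          ~: [set ((ord_max : 'I_n.+1), true); ((ord0 : 'I_n.+1), false)].
  apply/setP => v; rewrite [LHS]inE VXR VXS /balanced deg_dbl /= !inE.
  by rewrite negb_or.
have := cardsC [set ((ord_max : 'I_n.+1), true); ((ord0 : 'I_n.+1), false)].
rewrite cards2 card_prod card_ord card_bool xpair_eqE andbF /=.
move: (#|_|) => x; lia.
Qed.

End Ex2.

Theorem part2 (c : nat) : 1 <= c ->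
     exists (V : finType) (E : eqType) (ends : E -> V * V) (w : E -> nat)
            (R S : seq E),
       [/\ R != [::], parallel_eq_weight ends w, metric ends w,
           ncomp ends R = c &
           edge_minimizing ends w R S /\
           #|balanced_touched ends R S| = 2 * c - 2].
Proof.
case: c => [//|n] _.
exists (VV n), (EE n), (@endsE n), (@wE n), (RR n), (SS n); split.
- by rewrite /RR /R0 /=; case: (enum 'I_n.+1) (mem_enum 'I_n.+1 ord0) => [//|].
- exact: ex_parallel.
- exact: ex_metric.
- exact: ncompR.
- split; [exact: ex_minimizing | exact: cardBT].
Qed.

Theorem mainTheorem6 :
  (forall (V : finType) (E : eqType) (ends : E -> V * V) (w : E -> nat)
          (R : seq E),
      R != [::] -> parallel_eq_weight ends w -> metric ends w ->
      forall S : seq E, edge_minimizing ends w R S ->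
      #|balanced_touched ends R S| <= 2 * ncomp ends R - 2) /\
  (forall c : nat, 1 <= c ->
     exists (V : finType) (E : eqType) (ends : E -> V * V) (w : E -> nat)
            (R S : seq E),
       [/\ R != [::], parallel_eq_weight ends w, metric ends w,
           ncomp ends R = c &
           edge_minimizing ends w R S /\
           #|balanced_touched ends R S| = 2 * c - 2]).
Proof.
split; [exact: part1 | exact: part2].
Qed.
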